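(* Let $L\ge 2$ be an integer, let $A>0$, $\alpha>0$, $\beta>0$, $\sigma_v^2>0$ be known constants, let $\varphi\in[0,2\pi)$ be an unknown parameter, and let $\psi_l=2\pi l/L$ for $l=0,\dots,L-1$. Suppose we observe $$P[l]=A\left|\alpha+\beta e^{\mathrm{j}(\psi_l+\varphi)}+v_l\right|^2,\qquad l=0,\dots,L-1,$$ where $v_0,\dots,v_{L-1}$ are i.i.d. $\mathcal{CN}(0,\sigma_v^2)$. Define $K=2\alpha\beta/(\alpha^2+\beta^2)$, $\gamma_l=\left(\alpha^2+\beta^2+2\alpha\beta\cos(\psi_l+\varphi)\right)/\sigma_v^2$, and let $\bar\gamma=\frac1L\sum_{l=0}^{L-1}\gamma_l$. Then the Cramér–Rao lower bound $\mathrm{CRLB}(\varphi)$ for estimating $\varphi$ from $P[0],\dots,P[L-1]$ (i.e. the reciprocal of the Fisher information $-\mathbb{E}\left[\partial^2\log p(P[0],\dots,P[L-1]\mid\varphi)/\partial\varphi^2\right]$) satisfies $$\frac{1}{\mathrm{CRLB}(\varphi)}=K^2\bar\gamma^{\,2}\sum_{l=0}^{L-1}\sin^2(\psi_l+\varphi)\left(\frac{1}{\gamma_l}-g(\gamma_l)\right),$$ where $$g(\gamma)=\int_0^{+\infty}\gamma t\,\exp(-\gamma(1+t))\,I_0\!\left(2\gamma\sqrt t\right)\left(1-R^2\!\left(2\gamma\sqrt t\right)\right)\mathrm{d}t .$$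
   Context: $\mathcal{CN}(0,\sigma^2)$ is the circularly-symmetric complex Gaussian distribution with variance $\sigma^2$. $I_\nu$ denotes the $\nu$-th order modified Bessel function of the first kind, and $R(z)=I_1(z)/I_0(z)$. Each $P[l]$ thus follows a scaled noncentral chi-squared distribution with two degrees of freedom, with density $\frac{1}{A\sigma_v^2}\exp\!\left(-\frac{x+\lambda_l}{A\sigma_v^2}\right)I_0\!\left(\frac{\sqrt{\lambda_l x}}{A\sigma_v^2/2}\right)$ for $x\ge0$, where $\lambda_l=A(\alpha^2+\beta^2+2\alpha\beta\cos(\psi_l+\varphi))$. The phases $\psi_l=2\pi l/L$ come from the model in which the observations are taken at equally spaced instants $t_l=lT_s/L$ of a phase ramp $\psi(t)=2\pi t/T_s$. *)

(* Defs.v *)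
From Stdlib Require Import Reals Arith.
From Coquelicot Require Import Coquelicot.
Open Scope R_scope.

Fixpoint sumR (n : nat) (f : nat -> R) : R :=
  match n with O => 0 | S m => sumR m f + f m end.
Fixpoint prodR (n : nat) (f : nat -> R) : R :=
  match n with O => 1 | S m => prodR m f * f m end.

Definition besselI (nu : nat) (z : R) : R :=
  Series (fun k => (z / 2) ^ (2 * k + nu) / (INR (Factorial.fact k) * INR (Factorial.fact (k + nu)))).

Definition besselR (z : R) : R := besselI 1 z / besselI 0 z.

Definition int0inf (f : R -> R) : R :=
  RInt_gen f (at_point 0) (Rbar_locally p_infty).

Definition psi (L l : nat) : R := 2 * PI * INR l / INR L.

Definition lam (L : nat) (A alpha beta phi : R) (l : nat) : R :=
  A * (alpha ^ 2 + beta ^ 2 + 2 * alpha * beta * cos (psi L l + phi)).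

(* marginal density of P[l] at x >= 0 (scaled noncentral chi-squared, 2 d.o.f.) *)
Definition dens (L : nat) (A alpha beta s2 phi : R) (l : nat) (x : R) : R :=
  1 / (A * s2) * exp (- (x + lam L A alpha beta phi l) / (A * s2))
  * besselI 0 (sqrt (lam L A alpha beta phi l * x) / (A * s2 / 2)).

(* joint density p(P[0..L-1] | phi) of the independent observations;
   an observation vector is a function x : nat -> R (coordinates 0..L-1 used) *)
Definition joint_dens (L : nat) (A alpha beta s2 phi : R) (x : nat -> R) : R :=
  prodR L (fun l => dens L A alpha beta s2 phi l (x l)).

Definition upd (x : nat -> R) (n : nat) (t : R) : nat -> R :=
  fun k => if Nat.eqb k n then t else x k.

Fixpoint iter_int (n : nat) (F : (nat -> R) -> R) : R :=
  match n with
  | O => F (fun _ => 0)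
  | S m => int0inf (fun t => iter_int m (fun x => F (upd x m t)))
  end.

Definition fisher_info (L : nat) (A alpha beta s2 phi : R) : R :=
  - iter_int L (fun x =>
      Derive (fun ph => Derive (fun ph' => ln (joint_dens L A alpha beta s2 ph' x)) ph) phi
      * joint_dens L A alpha beta s2 phi x).

Definition CRLB (L : nat) (A alpha beta s2 phi : R) : R :=
  / fisher_info L A alpha beta s2 phi.

Definition gfun (g : R) : R :=
  int0inf (fun t => g * t * exp (- g * (1 + t)) * besselI 0 (2 * g * sqrt t)
                     * (1 - (besselR (2 * g * sqrt t)) ^ 2)).

Definition Kc (alpha beta : R) : R := 2 * alpha * beta / (alpha ^ 2 + beta ^ 2).

Definition gam (L : nat) (alpha beta s2 phi : R) (l : nat) : R :=
  (alpha ^ 2 + beta ^ 2 + 2 * alpha * beta * cos (psi L l + phi)) / s2.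

Definition gam_bar (L : nat) (alpha beta s2 phi : R) : R :=
  / INR L * sumR L (gam L alpha beta s2 phi).

(* Main.v *)
Require Import Defs.
From Stdlib Require Import Reals Lra Lia Psatz Arith Factorial ZArith Classical FunctionalExtensionality PropExtensionality.
From Coquelicot Require Import Coquelicot.
Open Scope R_scope.


Definition IntInf (f : R -> R) (v : R) :=
  (forall b, 0 <= b -> ex_RInt f 0 b) /\
  (forall eps, 0 < eps -> exists M, forall b, M <= b -> Rabs (RInt f 0 b - v) < eps).

Lemma IntInf_gen f v : IntInf f v -> is_RInt_gen f (at_point 0) (Rbar_locally p_infty) v.
Proof.
  intros [Hex Hlim] P [eps HP].
  destruct (Hlim eps (cond_pos eps)) as [M HM].
  exists (fun a => a = 0) (fun b => Rmax M 0 < b).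
  - reflexivity.
  - exists (Rmax M 0); auto.
  - intros a b -> Hb. simpl. exists (RInt f 0 b). split.
    + apply (RInt_correct f 0 b), Hex. generalize (Rmax_r M 0); lra.
    + apply HP. apply HM. generalize (Rmax_l M 0); lra.
Qed.

Lemma IntInf_int0inf f v : IntInf f v -> int0inf f = v.
Proof.
  intros H. unfold int0inf. apply is_RInt_gen_unique.
  apply IntInf_gen; auto.
Qed.

Lemma IntInf_ext f g v : (forall t, 0 < t -> f t = g t) -> IntInf f v -> IntInf g v.
Proof.
  intros E [Hex Hlim]. split.
  - intros b Hb. apply ex_RInt_ext with f; [|auto].
    intros x Hx. apply E. rewrite Rmin_left in Hx by lra. lra.
  - intros eps He. destruct (Hlim eps He) as [M HM]. exists (Rmax M 0).
    intros b Hb. rewrite <- (RInt_ext f). apply HM. generalize (Rmax_l M 0); lra.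
    intros x Hx. apply E. rewrite Rmin_left in Hx. lra. generalize (Rmax_r M 0); lra.
Qed.

Lemma IntInf_plus f g v w : IntInf f v -> IntInf g w -> IntInf (fun t => f t + g t) (v + w).
Proof.
  intros [Hf Lf] [Hg Lg]. split.
  - intros b Hb. apply (ex_RInt_plus f g); auto.
  - intros eps He. destruct (Lf (eps/2)) as [M1 H1]. lra. destruct (Lg (eps/2)) as [M2 H2]. lra.
    exists (Rmax 0 (Rmax M1 M2)). intros b Hb.
    assert (0 <= b /\ M1 <= b /\ M2 <= b) as (?&?&?).
    { generalize (Rmax_l 0 (Rmax M1 M2)) (Rmax_r 0 (Rmax M1 M2)) (Rmax_l M1 M2) (Rmax_r M1 M2). lra. }
    rewrite (RInt_plus f g) by auto.
    specialize (H1 b H0). specialize (H2 b H3).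
    change (plus (RInt f 0 b) (RInt g 0 b)) with (RInt f 0 b + RInt g 0 b).
    apply Rabs_def2 in H1. apply Rabs_def2 in H2. apply Rabs_def1; lra.
Qed.

Lemma IntInf_scal k f v : IntInf f v -> IntInf (fun t => k * f t) (k * v).
Proof.
  intros [Hf Lf]. split.
  - intros b Hb. apply (ex_RInt_scal f); auto.
  - intros eps He. destruct (Lf (eps / (Rabs k + 1))) as [M H1].
    { apply Rdiv_lt_0_compat; auto. generalize (Rabs_pos k); lra. }
    exists (Rmax 0 M). intros b Hb.
    assert (0 <= b /\ M <= b) as (?&?).
    { generalize (Rmax_l 0 M) (Rmax_r 0 M). lra. }
    rewrite (RInt_scal f) by auto.
    change (scal k (RInt f 0 b)) with (k * RInt f 0 b).
    specialize (H1 b H0).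
    replace (k * RInt f 0 b - k * v) with (k * (RInt f 0 b - v)) by ring.
    rewrite Rabs_mult.
    apply Rle_lt_trans with ((Rabs k + 1) * Rabs (RInt f 0 b - v)).
    { apply Rmult_le_compat_r. apply Rabs_pos. lra. }
    assert (0 < Rabs k + 1) by (generalize (Rabs_pos k); lra).
    apply Rmult_lt_reg_l with (/ (Rabs k + 1)). apply Rinv_0_lt_compat; auto.
    rewrite <- Rmult_assoc, Rinv_l by lra. unfold Rdiv in H1. lra.
Qed.

Lemma scal_R (a b : R) : scal a b = a * b.
Proof. reflexivity. Qed.

Lemma IntInf_scale f v c : 0 < c -> IntInf f v -> IntInf (fun t => f (c * t)) (v / c).
Proof.
  intros Hc [Hf Lf].
  assert (E : forall b, 0 <= b -> RInt (fun t => f (c * t)) 0 b = RInt f 0 (c * b) / c).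
  { intros b Hb.
    assert (H := RInt_comp_lin f c 0 0 b).
    rewrite !Rmult_0_r, !Rplus_0_r in H. assert (0 <= c * b) by nra; specialize (H (Hf _ H0)).
    rewrite <- H. transitivity (scal (/c) (RInt (fun y => scal c (f (c * y + 0))) 0 b)). 2:{ unfold scal; simpl; unfold mult; simpl; unfold Rdiv; ring. } rewrite <- (RInt_scal _ _ _ (/c)).
    - apply RInt_ext. intros x _. unfold scal; simpl; unfold mult; simpl.
      rewrite Rplus_0_r. field. lra.
    - apply (ex_RInt_comp_lin f c 0 0 b). rewrite !Rmult_0_r, !Rplus_0_r. apply Hf. apply Rmult_le_pos; lra.
  }
  split.
  - intros b Hb. apply ex_RInt_ext with (fun y => scal (/c) (scal c (f (c * y + 0)))).
    + intros x _. change (scal (/c) (scal c (f (c * x + 0))) = f (c * x)) with (/c * (c * f (c * x + 0)) = f (c * x)). rewrite Rplus_0_r. field. lra.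
    + apply (ex_RInt_scal (fun y => scal c (f (c * y + 0))) 0 b (/c)). apply (ex_RInt_comp_lin f c 0 0 b). rewrite !Rmult_0_r, !Rplus_0_r. apply Hf. apply Rmult_le_pos; lra.
  - intros eps He. destruct (Lf (eps * c)) as [M H1]. apply Rmult_lt_0_compat; lra.
    exists (Rmax 0 (M / c)). intros b Hb.
    assert (0 <= b /\ M / c <= b) as (?&?).
    { generalize (Rmax_l 0 (M/c)) (Rmax_r 0 (M/c)). lra. }
    rewrite E by auto.
    assert (M <= c * b).
    { apply Rmult_le_reg_r with (/c). apply Rinv_0_lt_compat; auto.
      replace (c * b * / c) with b by (field; lra). exact H0. }
    specialize (H1 _ H2).
    replace (RInt f 0 (c * b) / c - v / c) with ((RInt f 0 (c * b) - v) / c) by (field; lra).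
    unfold Rdiv. rewrite Rabs_mult, Rabs_inv, (Rabs_pos_eq c) by lra.
    apply Rmult_lt_reg_r with c; auto. rewrite Rmult_assoc, Rinv_l by lra. lra.
Qed.

Lemma is_RInt_ext_R (f g : R -> R) a b l : (forall x, Rmin a b < x < Rmax a b -> f x = g x) -> is_RInt f a b l -> is_RInt g a b l.
Proof. apply is_RInt_ext. Qed.

Lemma is_RInt_plus_R f g a b l1 l2 : is_RInt f a b l1 -> is_RInt g a b l2 ->
  is_RInt (fun y => f y + g y) a b (l1 + l2).
Proof. intros H1 H2. exact (is_RInt_plus f g a b l1 l2 H1 H2). Qed.

Lemma is_RInt_scal_R f a b k l : is_RInt f a b l -> is_RInt (fun y => k * f y) a b (k * l).
Proof. intros H. exact (is_RInt_scal f a b k l H). Qed.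

Lemma is_RInt_const_R a b c : is_RInt (fun _ => c) a b ((b - a) * c).
Proof. exact (is_RInt_const a b c). Qed.

Fixpoint Q (n : nat) (y : R) : R :=
  match n with O => 1 | S k => y ^ (S k) + INR (S k) * Q k y end.
Fixpoint Qd (n : nat) (y : R) : R :=
  match n with O => 0 | S k => INR (S k) * y ^ k + INR (S k) * Qd k y end.

Lemma Q_S k y : Q (S k) y = y ^ (S k) + INR (S k) * Q k y.
Proof. reflexivity. Qed.
Lemma Qd_S k y : Qd (S k) y = INR (S k) * y ^ k + INR (S k) * Qd k y.
Proof. reflexivity. Qed.

Lemma Q_der n y : is_derive (Q n) y (Qd n y).
Proof.
  induction n as [|k IH].
  - apply is_derive_ext with (fun _ => 1). reflexivity. apply (is_derive_const 1).
  - apply is_derive_ext with (fun y => y ^ (S k) + INR (S k) * Q k y). reflexivity.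
    auto_derive. apply (ex_derive_is_derive _ _ _ IH) || (exists (Qd k y); exact IH).
    replace (Derive (fun x => Q k x) y) with (Qd k y) by (symmetry; apply is_derive_unique; exact IH). change (match k with 0%nat => 1 | S _ => INR k + 1 end) with (INR (S k)). unfold Qd; fold Qd. ring.
Qed.

Lemma Q_diff n y : Q n y - Qd n y = y ^ n.
Proof.
  induction n as [|k IH]. simpl; ring. rewrite Q_S, Qd_S.
  replace (y ^ S k + INR (S k) * Q k y - (INR (S k) * y ^ k + INR (S k) * Qd k y))
    with (y ^ S k + INR (S k) * (Q k y - Qd k y - y ^ k)) by ring.
  rewrite IH. ring.
Qed.

Lemma Q0 n : Q n 0 = INR (fact n).
Proof.
  induction n as [|k IH]. reflexivity.
  rewrite Q_S, IH. rewrite pow_i by lia. change (fact (S k)) with (S k * fact k)%nat.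
  rewrite mult_INR. ring.
Qed.

Lemma Q_pos n y : 0 <= y -> 0 <= Q n y.
Proof.
  intros Hy. induction n as [|k IH]. simpl; lra. rewrite Q_S.
  apply Rplus_le_le_0_compat. apply pow_le; auto. apply Rmult_le_pos; auto. apply pos_INR.
Qed.

Lemma gamma_int n B : is_RInt (fun y => y ^ n * exp (- y)) 0 B (INR (fact n) - exp (- B) * Q n B).
Proof.
  assert (H := is_RInt_derive (fun y => - exp (- y) * Q n y) (fun y => y ^ n * exp (- y)) 0 B).
  replace (INR (fact n) - exp (- B) * Q n B) with
    (minus (- exp (- B) * Q n B) (- exp (- 0) * Q n 0)).
  apply H.
  - intros x _. auto_derive. exists (Qd n x); apply Q_der.
    replace (Derive (fun x => Q n x) x) with (Qd n x) by (symmetry; apply is_derive_unique; apply Q_der).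
    rewrite <- (Q_diff n x). ring.
  - intros x _. apply (@ex_derive_continuous R_AbsRing R_NormedModule (fun y => y ^ n * exp (- y)) x). auto_derive. auto.
  - rewrite Q0. rewrite Ropp_0, exp_0. unfold minus, plus, opp; simpl. ring.
Qed.

Definition tends0 (h : R -> R) :=
  forall eps, 0 < eps -> exists M, forall B, M <= B -> Rabs (h B) < eps.

Lemma tends0_plus h g : tends0 h -> tends0 g -> tends0 (fun B => h B + g B).
Proof.
  intros H G eps He. destruct (H (eps/2)) as [M1 H1]. lra. destruct (G (eps/2)) as [M2 H2]. lra.
  exists (Rmax M1 M2). intros B HB.
  specialize (H1 B ltac:(generalize (Rmax_l M1 M2); lra)).
  specialize (H2 B ltac:(generalize (Rmax_r M1 M2); lra)).
  apply Rle_lt_trans with (Rabs (h B) + Rabs (g B)). apply Rabs_triang. lra.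
Qed.

Lemma tends0_scal k h : tends0 h -> tends0 (fun B => k * h B).
Proof.
  intros H eps He. destruct (H (eps / (Rabs k + 1))) as [M HM].
  { apply Rdiv_lt_0_compat; auto. generalize (Rabs_pos k); lra. }
  exists M. intros B HB. specialize (HM B HB). rewrite Rabs_mult.
  assert (0 < Rabs k + 1) by (generalize (Rabs_pos k); lra).
  apply Rle_lt_trans with ((Rabs k + 1) * Rabs (h B)).
  { apply Rmult_le_compat_r. apply Rabs_pos. lra. }
  apply Rmult_lt_reg_l with (/ (Rabs k + 1)). apply Rinv_0_lt_compat; auto.
  rewrite <- Rmult_assoc, Rinv_l by lra. unfold Rdiv in HM. lra.
Qed.

Lemma tends0_pow_exp j : tends0 (fun B => B ^ j * exp (- B)).
Proof.
  intros eps He. exists (Rmax 1 (INR (fact (S j)) / eps + 1)). intros B HB.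
  assert (B1 : 1 <= B) by (generalize (Rmax_l 1 (INR (fact (S j)) / eps + 1)); lra).
  assert (B2 : INR (fact (S j)) / eps + 1 <= B) by (generalize (Rmax_r 1 (INR (fact (S j)) / eps + 1)); lra).
  assert (Hf : 0 < INR (fact (S j))) by (apply lt_0_INR, lt_O_fact).
  assert (T : B ^ S j / INR (fact (S j)) <= exp B).
  { eapply Rle_trans; [|apply (exp_ge_taylor B (S j)); lra].
    rewrite tech5.
    assert (0 <= sum_f_R0 (fun k : nat => B ^ k / INR (fact k)) j).
    { apply cond_pos_sum. intros k. apply Rdiv_le_0_compat. apply pow_le; lra. apply lt_0_INR, lt_O_fact. }
    lra. }
  rewrite Rabs_pos_eq by (apply Rmult_le_pos; [apply pow_le; lra| apply Rlt_le, exp_pos]).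
  rewrite exp_Ropp.
  assert (Pe : 0 < exp B) by apply exp_pos.
  apply Rmult_le_compat_r with (r := / exp B) in T; [|apply Rlt_le, Rinv_0_lt_compat; auto].
  rewrite Rinv_r in T by lra.
  (* B^j / exp B <= fact / B *)
  assert (E : B ^ j * / exp B = (B ^ S j / INR (fact (S j)) * / exp B) * (INR (fact (S j)) / B)).
  { simpl pow. field. split; lra. }
  rewrite E.
  apply Rle_lt_trans with (1 * (INR (fact (S j)) / B)).
  { apply Rmult_le_compat_r. apply Rdiv_le_0_compat; lra. lra. }
  rewrite Rmult_1_l.
  apply Rmult_lt_reg_r with (B / eps). apply Rdiv_lt_0_compat; lra.
  replace (INR (fact (S j)) / B * (B / eps)) with (INR (fact (S j)) / eps) by (field; lra).
  replace (eps * (B / eps)) with B by (field; lra). lra.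
Qed.

Lemma tends0_ext h g : (forall B, h B = g B) -> tends0 h -> tends0 g.
Proof. intros E H eps He. destruct (H eps He) as [M HM]. exists M. intros B HB. rewrite <- E. auto. Qed.

Lemma tends0_expQ n : tends0 (fun B => exp (- B) * Q n B).
Proof.
  induction n as [|k IH].
  - apply tends0_ext with (fun B => B ^ 0 * exp (- B)). intros; simpl; ring. apply tends0_pow_exp.
  - apply tends0_ext with (fun B => B ^ S k * exp (- B) + INR (S k) * (exp (- B) * Q k B)).
    intros; rewrite Q_S; ring.
    apply tends0_plus. apply tends0_pow_exp. apply tends0_scal. exact IH.
Qed.

Lemma tends0_sum (g : nat -> R -> R) N : (forall k, tends0 (g k)) ->
  tends0 (fun B => sum_f_R0 (fun k => g k B) N).
Proof.
  intros H. induction N as [|N IH]. simpl. apply H.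
  apply tends0_ext with (fun B => sum_f_R0 (fun k => g k B) N + g (S N) B).
  intros; reflexivity. apply tends0_plus; auto.
Qed.

Lemma Series_zero : Series (fun _ : nat => 0) = 0.
Proof.
  transitivity (Series (fun n : nat => 0 * 0)). apply Series_ext; intros; ring.
  rewrite Series_scal_l; ring.
Qed.

Lemma sum_le_series a N S : (forall k, 0 <= a k) -> is_series a S -> sum_f_R0 a N <= S.
Proof.
  intros Ha HS. apply is_series_Reals in HS. apply sum_incr; auto.
Qed.

Lemma termwise (b : nat -> R) (m : nat) (Sv : R) :
  (forall k, 0 <= b k) ->
  (forall y, ex_series (fun k => b k * y ^ k)) ->
  (forall y, ex_derive (PSeries b) y) ->
  is_series (fun k => b k * INR (fact (k + m))) Sv ->
  IntInf (fun y => y ^ m * exp (- y) * PSeries b y) Sv.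
Proof.
  intros Hb exs exd HS.
  set (f := fun y => y ^ m * exp (- y) * PSeries b y).
  assert (cont : forall y, continuous f y).
  { intros y. apply (@ex_derive_continuous R_AbsRing R_NormedModule). unfold f; auto_derive; auto. }
  assert (exf : forall B, ex_RInt f 0 B).
  { intros B. apply (ex_RInt_continuous (V := R_CompleteNormedModule)). intros; apply cont. }
  set (T := fun N y => Series (fun k => b (S N + k)%nat * y ^ (S N + k))).
  assert (Hsplit : forall N y, PSeries b y = sum_f_R0 (fun k => b k * y ^ k) N + T N y).
  { intros N y. unfold PSeries, T. rewrite (Series_incr_n _ (S N)). reflexivity. lia. apply exs. }
  assert (Tpos : forall N y, 0 <= y -> 0 <= T N y).
  { intros N y Hy. rewrite <- Series_zero. apply Series_le.
    intros n; split. lra. apply Rmult_le_pos; auto. apply pow_le; auto.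
    apply (ex_series_incr_n (fun k => b k * y ^ k)). apply exs. }
  assert (Tmono : forall N y B, 0 <= y <= B -> T N y <= T N B).
  { intros N y B Hy. apply Series_le.
    intros n; split. apply Rmult_le_pos; auto. apply pow_le; lra.
    apply Rmult_le_compat_l; auto. apply pow_incr; lra.
    apply (ex_series_incr_n (fun k => b k * B ^ k)). apply exs. }
  assert (Tlim : forall B eps, 0 < eps -> exists N, T N B < eps).
  { intros B eps He. assert (H := Series_correct _ (exs B)). apply is_series_Reals in H.
    destruct (H eps He) as [N HN]. exists N. specialize (HN N (le_n _)).
    unfold Rdist in HN. change (Series (fun k => b k * B ^ k)) with (PSeries b B) in HN. rewrite (Hsplit N B) in HN.
    replace (sum_f_R0 (fun k : nat => b k * B ^ k) N - (sum_f_R0 (fun k : nat => b k * B ^ k) N + T N B))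
      with (- T N B) in HN by ring.
    rewrite Rabs_Ropp in HN. eapply Rle_lt_trans; [apply Rle_abs|exact HN]. }
  set (V := fun N B => sum_f_R0 (fun k => b k * (INR (fact (k + m)) - exp (- B) * Q (k + m) B)) N).
  assert (poly : forall N B, is_RInt (fun y => y ^ m * exp (- y) * sum_f_R0 (fun k => b k * y ^ k) N) 0 B (V N B)).
  { intros N B. unfold V. induction N as [|N IH].
    - simpl sum_f_R0. apply is_RInt_ext_R with (fun y => b 0%nat * (y ^ (0 + m) * exp (- y))).
      intros; simpl; ring. apply is_RInt_scal_R. apply gamma_int.
    - apply is_RInt_ext_R with (fun y => y ^ m * exp (- y) * sum_f_R0 (fun k => b k * y ^ k) N
                                       + b (S N) * (y ^ (S N + m) * exp (- y))).
      intros; simpl sum_f_R0. rewrite pow_add. simpl pow. ring.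
      simpl sum_f_R0 at 2. apply is_RInt_plus_R. exact IH. apply is_RInt_scal_R. apply gamma_int. }
  assert (lower : forall N B, 0 <= B -> V N B <= RInt f 0 B).
  { intros N B HB. rewrite <- (is_RInt_unique _ _ _ _ (poly N B)).
    apply RInt_le; auto. eexists; apply poly.
    intros x Hx. unfold f. rewrite (Hsplit N x).
    assert (0 <= x ^ m * exp (- x) * T N x).
    { apply Rmult_le_pos. apply Rmult_le_pos. apply pow_le; lra. apply Rlt_le, exp_pos. apply Tpos; lra. }
    lra. }
  assert (Vle : forall N B, 0 <= B -> V N B <= Sv).
  { intros N B HB. eapply Rle_trans; [|apply (sum_le_series (fun k => b k * INR (fact (k + m))) N Sv); auto].
    apply sum_Rle. intros n _. apply Rmult_le_compat_l; auto.
    assert (0 <= exp (- B) * Q (n + m) B). apply Rmult_le_pos. apply Rlt_le, exp_pos. apply Q_pos; auto.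
    lra. intros k. apply Rmult_le_pos; auto. apply pos_INR. }
  assert (upper : forall B, 0 <= B -> RInt f 0 B <= Sv).
  { intros B HB. apply Rnot_lt_le. intros Hlt.
    set (d := RInt f 0 B - Sv).
    assert (Hd : 0 < d) by (unfold d; lra).
    assert (HP : 0 < B ^ S m + 1) by (generalize (pow_le B (S m) HB); lra).
    destruct (Tlim B (d / (B ^ S m + 1))) as [N HN]. apply Rdiv_lt_0_compat; auto.
    assert (Hc : RInt f 0 B <= V N B + (B - 0) * (B ^ m * T N B)).
    { rewrite <- (is_RInt_unique _ _ _ _ (is_RInt_plus_R _ _ _ _ _ _ (poly N B) (is_RInt_const_R 0 B (B ^ m * T N B)))).
      apply RInt_le; auto. eexists; apply (is_RInt_plus_R _ _ _ _ _ _ (poly N B) (is_RInt_const_R 0 B (B ^ m * T N B))).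
      intros x Hx. unfold f. rewrite (Hsplit N x).
      assert (x ^ m * exp (- x) * T N x <= B ^ m * T N B).
      { rewrite Rmult_assoc. apply Rmult_le_compat. apply pow_le; lra.
        apply Rmult_le_pos. apply Rlt_le, exp_pos. apply Tpos; lra.
        apply pow_incr; lra.
        replace (T N B) with (1 * T N B) by ring. apply Rmult_le_compat.
        apply Rlt_le, exp_pos. apply Tpos; lra.
        rewrite <- exp_0. apply Rlt_le, exp_increasing. lra. apply Tmono; lra. }
      lra. }
    assert (HT0 := Tpos N B HB).
    assert (B * (B ^ m * T N B) <= B ^ S m * (d / (B ^ S m + 1))).
    { replace (B * (B ^ m * T N B)) with (B ^ S m * T N B) by (simpl; ring).
      apply Rmult_le_compat_l. apply pow_le; auto. lra. }
    assert (B ^ S m * (d / (B ^ S m + 1)) < d).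
    { apply Rmult_lt_reg_r with (B ^ S m + 1); auto.
      replace (B ^ S m * (d / (B ^ S m + 1)) * (B ^ S m + 1)) with (B ^ S m * d) by (field; lra). nra. }
    specialize (Vle N B HB). unfold d in *. lra. }
  split. { intros; apply exf. }
  intros eps He.
  assert (HS' := HS). apply is_series_Reals in HS'.
  destruct (HS' (eps / 2)) as [N HN]. lra. specialize (HN N (le_n _)). unfold Rdist in HN.
  destruct (tends0_sum (fun k B => b k * (exp (- B) * Q (k + m) B)) N) with (eps / 2) as [M HM].
  { intros k. apply tends0_scal. apply tends0_expQ. } lra.
  exists (Rmax 0 M). intros B HB.
  assert (HB0 : 0 <= B) by (generalize (Rmax_l 0 M); lra).
  assert (HBM : M <= B) by (generalize (Rmax_r 0 M); lra).
  specialize (HM B HBM). specialize (lower N B HB0). specialize (upper B HB0).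
  assert (EV : V N B = sum_f_R0 (fun k => b k * INR (fact (k + m))) N - sum_f_R0 (fun k => b k * (exp (- B) * Q (k + m) B)) N).
  { unfold V. rewrite <- minus_sum. apply sum_eq. intros; ring. }
  apply Rabs_def2 in HN. apply Rabs_def2 in HM.
  fold f. apply Rabs_def1; lra.
Qed.

Definition aJ (k : nat) : R := / (4 ^ k * (INR (fact k)) ^ 2).
Definition J (q : R) : R := PSeries aJ q.
Definition J1 (q : R) : R := PSeries (PS_derive aJ) q.
Definition J2 (q : R) : R := PSeries (PS_derive (PS_derive aJ)) q.

Lemma fact_pos' k : 0 < INR (fact k).
Proof. apply lt_0_INR, lt_O_fact. Qed.

Lemma fact_S' k : INR (fact (S k)) = (INR k + 1) * INR (fact k).
Proof. change (fact (S k)) with (S k * fact k)%nat. rewrite mult_INR, S_INR. ring. Qed.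

Lemma aJ_pos k : 0 < aJ k.
Proof. unfold aJ. apply Rinv_0_lt_compat. apply Rmult_lt_0_compat. apply pow_lt; lra.
  apply pow_lt, fact_pos'. Qed.

Lemma a1_eq k : PS_derive aJ k = / (4 ^ S k * INR (fact k) * INR (fact (S k))).
Proof.
  unfold PS_derive, aJ. rewrite fact_S'. rewrite S_INR.
  assert (H := fact_pos' k). assert (0 < 4 ^ k) by (apply pow_lt; lra).
  assert (0 <= INR k) by apply pos_INR. simpl pow. field. repeat split; try lra.
Qed.

Lemma a2_eq k : PS_derive (PS_derive aJ) k = / (4 ^ S (S k) * INR (fact k) * INR (fact (S (S k)))).
Proof.
  unfold PS_derive at 1. rewrite a1_eq. rewrite !fact_S'. rewrite S_INR.
  assert (H := fact_pos' k). assert (0 < 4 ^ k) by (apply pow_lt; lra).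
  assert (0 <= INR k) by apply pos_INR.
  simpl pow. field. repeat split; try lra.
Qed.

Lemma CV_aJ : CV_radius aJ = p_infty.
Proof.
  apply CV_radius_infinite_DAlembert.
  - intros n. generalize (aJ_pos n); lra.
  - apply is_lim_seq_Reals. intros eps He.
    destruct (archimed (/ eps)) as [Ha _].
    assert (Hz : (0 <= Z.to_nat (up (/ eps)))%nat) by lia.
    exists (Z.to_nat (up (/ eps))). intros n Hn. unfold Rdist.
    assert (E : aJ (S n) / aJ n = / (4 * (INR n + 1) ^ 2)).
    { unfold aJ. rewrite fact_S'. assert (H := fact_pos' n). assert (0 < 4 ^ n) by (apply pow_lt; lra).
      assert (0 <= INR n) by apply pos_INR. simpl pow. field. repeat split; lra. }
    rewrite E. rewrite Rminus_0_r, Rabs_Rabsolu.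
    assert (0 <= INR n) by apply pos_INR.
    rewrite Rabs_pos_eq by (apply Rlt_le, Rinv_0_lt_compat; nra).
    assert (INR n >= / eps - 1).
    { apply Rle_ge. apply le_INR in Hn. rewrite INR_IZR_INZ in Hn.
      assert (/eps > 0) by (apply Rinv_0_lt_compat; lra).
      assert (Hp : (0 <= up (/ eps))%Z) by (apply le_IZR; lra).
      rewrite Z2Nat.id in Hn by exact Hp. lra. }
    assert (/eps > 0) by (apply Rinv_0_lt_compat; lra).
    apply Rlt_le_trans with (/ (INR n + 1)).
    + apply Rinv_lt_contravar. nra. nra.
    + replace eps with (/ / eps) by (field; lra). apply Rinv_le_contravar; lra.
Qed.

Lemma CV_a1 : CV_radius (PS_derive aJ) = p_infty.
Proof. rewrite CV_radius_derive. apply CV_aJ. Qed.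
Lemma CV_a2 : CV_radius (PS_derive (PS_derive aJ)) = p_infty.
Proof. rewrite !CV_radius_derive. apply CV_aJ. Qed.

Lemma J_der q : is_derive J q (J1 q).
Proof. apply is_derive_PSeries. rewrite CV_aJ. exact I. Qed.
Lemma J1_der q : is_derive J1 q (J2 q).
Proof. apply is_derive_PSeries. rewrite CV_a1. exact I. Qed.
Lemma J2_exd q : ex_derive J2 q.
Proof. apply ex_derive_PSeries. rewrite CV_a2. exact I. Qed.

Lemma exs_of (a : nat -> R) : CV_radius a = p_infty -> forall y, ex_series (fun k => a k * y ^ k).
Proof.
  intros Hr y. assert (H := CV_radius_inside a y). rewrite Hr in H. specialize (H I).
  apply ex_series_ext with (2 := H). intros k. rewrite pow_n_pow.
  change (scal (y ^ k) (a k)) with (y ^ k * a k). apply Rmult_comm.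
Qed.

Lemma scaled_eq (a : nat -> R) c y : PSeries (fun k => a k * c ^ k) y = PSeries a (c * y).
Proof. unfold PSeries. apply Series_ext. intros k. rewrite Rpow_mult_distr. ring. Qed.

Lemma scaled_exs (a : nat -> R) c : CV_radius a = p_infty -> forall y, ex_series (fun k => a k * c ^ k * y ^ k).
Proof.
  intros Hr y. apply ex_series_ext with (fun k => a k * (c * y) ^ k).
  intros k. rewrite Rpow_mult_distr. symmetry; apply Rmult_assoc. apply exs_of; auto.
Qed.

Lemma scaled_exd (a : nat -> R) c : CV_radius a = p_infty -> forall y, ex_derive (PSeries (fun k => a k * c ^ k)) y.
Proof.
  intros Hr y. apply ex_derive_ext with (fun y => PSeries a (c * y)).
  intros; symmetry; apply scaled_eq.
  apply ex_derive_comp. apply ex_derive_PSeries. rewrite Hr; exact I.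
  apply ex_derive_scal. apply ex_derive_id.
Qed.

Lemma is_series_ext_R (a b : nat -> R) l : (forall n, a n = b n) -> is_series a l -> is_series b l.
Proof. apply is_series_ext. Qed.

Lemma Series_nonneg (a : nat -> R) : (forall k, 0 <= a k) -> ex_series a -> 0 <= Series a.
Proof. intros H E. rewrite <- Series_zero. apply Series_le; auto. intros; split; auto; lra. Qed.

Lemma J_ge1 q : 0 <= q -> 1 <= J q.
Proof.
  intros Hq. unfold J, PSeries. rewrite Series_incr_1 by (apply exs_of, CV_aJ).
  assert (aJ 0 * q ^ 0 = 1) by (unfold aJ; simpl; field).
  assert (0 <= Series (fun k => aJ (S k) * q ^ S k)).
  { apply Series_nonneg. intros k. apply Rmult_le_pos. apply Rlt_le, aJ_pos. apply pow_le; auto.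
    apply (ex_series_incr_1 (fun k => aJ k * q ^ k)). apply exs_of, CV_aJ. }
  lra.
Qed.

Lemma J_pos q : 0 <= q -> 0 < J q.
Proof. intros H; generalize (J_ge1 q H); lra. Qed.

Lemma a1_pos k : 0 < PS_derive aJ k.
Proof. rewrite a1_eq. apply Rinv_0_lt_compat. apply Rmult_lt_0_compat; [apply Rmult_lt_0_compat|].
  apply pow_lt; lra. apply fact_pos'. apply fact_pos'. Qed.

Lemma a2_pos k : 0 < PS_derive (PS_derive aJ) k.
Proof. rewrite a2_eq. apply Rinv_0_lt_compat. apply Rmult_lt_0_compat; [apply Rmult_lt_0_compat|].
  apply pow_lt; lra. apply fact_pos'. apply fact_pos'. Qed.

Lemma J1_nonneg q : 0 <= q -> 0 <= J1 q.
Proof.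
  intros Hq. apply Series_nonneg. intros k. apply Rmult_le_pos. apply Rlt_le, a1_pos. apply pow_le; auto.
  apply exs_of, CV_a1.
Qed.

Lemma J1_le q : 0 <= q -> 4 * J1 q <= J q.
Proof.
  intros Hq. unfold J1, J, PSeries. rewrite <- Series_scal_l. apply Series_le.
  - intros k. split. apply Rmult_le_pos. lra. apply Rmult_le_pos. apply Rlt_le, a1_pos. apply pow_le; auto.
    rewrite <- Rmult_assoc. apply Rmult_le_compat_r. apply pow_le; auto.
    rewrite a1_eq. unfold aJ. rewrite fact_S'.
    assert (H := fact_pos' k). assert (0 < 4 ^ k) by (apply pow_lt; lra).
    assert (0 <= INR k) by apply pos_INR.
    replace (4 * / (4 ^ S k * INR (fact k) * ((INR k + 1) * INR (fact k))))
      with (/ (4 ^ k * INR (fact k) ^ 2) * / (INR k + 1)) by (simpl pow; field; repeat split; lra).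
    rewrite <- (Rmult_1_r (/ (4 ^ k * INR (fact k) ^ 2))) at 2.
    apply Rmult_le_compat_l. apply Rlt_le, Rinv_0_lt_compat. apply Rmult_lt_0_compat; auto. apply pow_lt; auto.
    rewrite <- Rinv_1. apply Rinv_le_contravar; lra.
  - apply exs_of, CV_aJ.
Qed.

Lemma besselI0_J z : besselI 0 z = J (z ^ 2).
Proof.
  unfold besselI, J, PSeries. apply Series_ext. intros k.
  rewrite Nat.add_0_r, pow_mult. unfold aJ.
  replace ((z / 2) ^ 2) with (z ^ 2 * / 4) by field.
  rewrite Rpow_mult_distr, pow_inv.
  assert (H := fact_pos' k). assert (0 < 4 ^ k) by (apply pow_lt; lra).
  rewrite Nat.add_0_r. field. split; lra.
Qed.

Lemma besselI1_J z : besselI 1 z = 2 * z * J1 (z ^ 2).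
Proof.
  unfold besselI, J1, PSeries. rewrite <- Series_scal_l. apply Series_ext. intros k.
  rewrite a1_eq. rewrite pow_add, pow_mult.
  replace ((z / 2) ^ 2) with (z ^ 2 * / 4) by field.
  rewrite Rpow_mult_distr, pow_inv. replace (k + 1)%nat with (S k) by lia.
  assert (H := fact_pos' k). assert (H' := fact_pos' (S k)). assert (0 < 4 ^ k) by (apply pow_lt; lra).
  simpl pow. field. repeat split; lra.
Qed.

Lemma E0 g : is_series (fun k => g ^ k / INR (fact k)) (exp g).
Proof.
  assert (H := is_exp_Reals g). unfold is_pseries in H.
  apply is_series_ext_R with (2 := H). intros k. rewrite pow_n_pow.
  change (scal (g ^ k) (/ INR (fact k))) with (g ^ k * / INR (fact k)). reflexivity.
Qed.

Lemma E1 g c : is_series (fun k => g ^ k * (INR k + c) / INR (fact k)) ((g + c) * exp g).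
Proof.
  assert (Hk : is_series (fun k => g ^ k * INR k / INR (fact k)) (g * exp g)).
  { apply is_series_decr_1.
    change (is_series (fun k => g ^ S k * INR (S k) / INR (fact (S k))) (g * exp g + - (g ^ 0 * INR 0 / INR (fact 0)))).
    replace (g * exp g + - (g ^ 0 * INR 0 / INR (fact 0))) with (exp g * g)
      by (simpl INR; simpl fact; simpl INR; field).
    apply is_series_ext_R with (fun k => (g ^ k / INR (fact k)) * g).
    - intros k. rewrite fact_S', S_INR. assert (H := fact_pos' k). assert (0 <= INR k) by apply pos_INR.
      simpl pow. field. split; lra.
    - exact (is_series_scal_r g (fun k => g ^ k / INR (fact k)) (exp g) (E0 g)). }
  apply is_series_ext_R with (fun k => g ^ k * INR k / INR (fact k) + c * (g ^ k / INR (fact k))).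
  intros k. field. apply Rgt_not_eq, fact_pos'.
  replace ((g + c) * exp g) with (g * exp g + c * exp g) by ring.
  apply (is_series_plus (fun k => g ^ k * INR k / INR (fact k)) (fun k => c * (g ^ k / INR (fact k)))).
  exact Hk. apply (is_series_scal_l c (fun k => g ^ k / INR (fact k))). apply E0.
Qed.

Lemma S_I1 g : is_series (fun k => aJ k * (4 * g) ^ k * INR (fact (k + 0))) (exp g).
Proof.
  apply is_series_ext_R with (2 := E0 g). intros k. rewrite Nat.add_0_r. unfold aJ.
  rewrite Rpow_mult_distr. assert (H := fact_pos' k). assert (0 < 4 ^ k) by (apply pow_lt; lra).
  field. split; lra.
Qed.

Lemma S_I4 g : is_series (fun k => aJ k * (4 * g) ^ k * INR (fact (k + 1))) ((g + 1) * exp g).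
Proof.
  apply is_series_ext_R with (2 := E1 g 1). intros k. replace (k + 1)%nat with (S k) by lia.
  rewrite fact_S'. unfold aJ.
  rewrite Rpow_mult_distr. assert (H := fact_pos' k). assert (0 < 4 ^ k) by (apply pow_lt; lra).
  field. split; lra.
Qed.

Lemma S_I2 g : is_series (fun k => PS_derive aJ k * (4 * g) ^ k * INR (fact (k + 1))) (exp g / 4).
Proof.
  apply is_series_ext_R with (fun k => g ^ k / INR (fact k) * / 4).
  intros k. replace (k + 1)%nat with (S k) by lia. rewrite a1_eq.
  rewrite Rpow_mult_distr. assert (H := fact_pos' k). assert (H' := fact_pos' (S k)).
  assert (0 < 4 ^ k) by (apply pow_lt; lra). simpl pow. field. repeat split; lra.
  apply is_series_scal_r. apply E0.
Qed.

Lemma S_I5 g : is_series (fun k => PS_derive aJ k * (4 * g) ^ k * INR (fact (k + 2))) ((g + 2) * exp g / 4).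
Proof.
  apply is_series_ext_R with (fun k => g ^ k * (INR k + 2) / INR (fact k) * / 4).
  intros k. replace (k + 2)%nat with (S (S k)) by lia. rewrite a1_eq.
  rewrite (fact_S' (S k)), S_INR.
  rewrite Rpow_mult_distr. assert (H := fact_pos' k). assert (H' := fact_pos' (S k)).
  assert (0 <= INR k) by apply pos_INR.
  assert (0 < 4 ^ k) by (apply pow_lt; lra). simpl pow. field. repeat split; lra.
  apply is_series_scal_r. apply E1.
Qed.

Lemma S_I3 g : is_series (fun k => PS_derive (PS_derive aJ) k * (4 * g) ^ k * INR (fact (k + 2))) (exp g / 16).
Proof.
  apply is_series_ext_R with (fun k => g ^ k / INR (fact k) * / 16).
  intros k. replace (k + 2)%nat with (S (S k)) by lia. rewrite a2_eq.
  rewrite Rpow_mult_distr. assert (H := fact_pos' k). assert (H' := fact_pos' (S (S k))).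
  assert (0 < 4 ^ k) by (apply pow_lt; lra). simpl pow. field. repeat split; lra.
  apply is_series_scal_r. apply E0.
Qed.

Lemma RInt_mono0 (h : R -> R) b1 b2 : (forall t, 0 <= t -> 0 <= h t) ->
  (forall b, 0 <= b -> ex_RInt h 0 b) -> 0 <= b1 <= b2 -> RInt h 0 b1 <= RInt h 0 b2.
Proof.
  intros Hp Hex Hb.
  assert (E1 : ex_RInt h 0 b1) by (apply Hex; lra).
  assert (E2 : ex_RInt h b1 b2) by (apply (ex_RInt_Chasles_2 h 0 b1 b2); [lra| apply Hex; lra]).
  rewrite <- (RInt_Chasles h 0 b1 b2 E1 E2).
  change (plus (RInt h 0 b1) (RInt h b1 b2)) with (RInt h 0 b1 + RInt h b1 b2).
  assert (0 <= RInt h b1 b2). { apply RInt_ge_0; auto. lra. intros; apply Hp; lra. }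
  lra.
Qed.

Lemma IntInf_le_lim (h : R -> R) v b : (forall t, 0 <= t -> 0 <= h t) -> IntInf h v -> 0 <= b -> RInt h 0 b <= v.
Proof.
  intros Hp [Hex Hl] Hb. apply Rnot_lt_le. intros Hlt.
  destruct (Hl (RInt h 0 b - v)) as [M HM]. lra.
  specialize (HM (Rmax b M) (Rmax_r b M)).
  assert (RInt h 0 b <= RInt h 0 (Rmax b M)).
  { apply RInt_mono0; auto. split; auto. apply Rmax_l. }
  apply Rabs_def2 in HM. lra.
Qed.

Lemma IntInf_cmp f g v : (forall t, 0 <= t -> 0 <= f t <= g t) ->
  (forall b, 0 <= b -> ex_RInt f 0 b) -> IntInf g v -> exists w, IntInf f w.
Proof.
  intros Hfg Hf Hg.
  assert (Hgp : forall t, 0 <= t -> 0 <= g t) by (intros t Ht; specialize (Hfg t Ht); lra).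
  assert (Hfp : forall t, 0 <= t -> 0 <= f t) by (intros t Ht; specialize (Hfg t Ht); lra).
  assert (Bd : forall b, 0 <= b -> RInt f 0 b <= v).
  { intros b Hb. eapply Rle_trans; [|apply (IntInf_le_lim g v b Hgp Hg Hb)].
    apply RInt_le; auto. apply (proj1 Hg); auto. intros x Hx; apply Hfg; lra. }
  set (E := fun r => exists b, 0 <= b /\ r = RInt f 0 b).
  destruct (completeness E) as [w [Hub Hlub]].
  { exists v. intros r [b [Hb ->]]. apply Bd; auto. }
  { exists (RInt f 0 0). exists 0. split; [lra|reflexivity]. }
  exists w. split; auto.
  intros eps He.
  destruct (classic (exists b, 0 <= b /\ w - eps < RInt f 0 b)) as [[b0 [Hb0 Hlt]]|Hn].
  - exists b0. intros b Hb.
    assert (RInt f 0 b0 <= RInt f 0 b) by (apply RInt_mono0; auto).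
    assert (RInt f 0 b <= w) by (apply Hub; exists b; split; [lra|reflexivity]).
    apply Rabs_def1; lra.
  - exfalso. assert (w <= w - eps).
    { apply Hlub. intros r [b [Hb ->]]. apply Rnot_lt_le. intros Hlt. apply Hn. exists b; auto. }
    lra.
Qed.

Lemma IntInf_zero : IntInf (fun _ => 0) 0.
Proof.
  split. intros; apply ex_RInt_const.
  intros eps He. exists 0. intros b Hb. rewrite RInt_const.
  change (scal (b - 0) 0) with ((b - 0) * 0). rewrite Rmult_0_r, Rminus_0_r, Rabs_R0. auto.
Qed.

Lemma IntInf_sumR n (F : nat -> R -> R) (V : nat -> R) :
  (forall l, IntInf (F l) (V l)) -> IntInf (fun t => sumR n (fun l => F l t)) (sumR n V).
Proof.
  intros H. induction n as [|n IH]. apply IntInf_zero.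
  simpl. apply IntInf_plus; auto.
Qed.

Lemma IntInf_unique f v w : IntInf f v -> IntInf f w -> v = w.
Proof.
  intros [_ H1] [_ H2]. apply Rle_antisym; apply Rnot_lt_le; intros Hlt.
  - destruct (H1 ((v - w)/2)) as [M1 HM1]. lra. destruct (H2 ((v - w)/2)) as [M2 HM2]. lra.
    specialize (HM1 (Rmax M1 M2) (Rmax_l _ _)). specialize (HM2 (Rmax M1 M2) (Rmax_r _ _)).
    apply Rabs_def2 in HM1. apply Rabs_def2 in HM2. lra.
  - destruct (H1 ((w - v)/2)) as [M1 HM1]. lra. destruct (H2 ((w - v)/2)) as [M2 HM2]. lra.
    specialize (HM1 (Rmax M1 M2) (Rmax_l _ _)). specialize (HM2 (Rmax M1 M2) (Rmax_r _ _)).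
    apply Rabs_def2 in HM1. apply Rabs_def2 in HM2. lra.
Qed.

Lemma coef_nonneg (a : nat -> R) g : (forall k, 0 < a k) -> 0 <= g -> forall k, 0 <= a k * (4 * g) ^ k.
Proof. intros Ha Hg k. apply Rmult_le_pos. apply Rlt_le, Ha. apply pow_le; lra. Qed.

Lemma termwise_J (a : nat -> R) (m : nat) g v : (forall k, 0 < a k) -> CV_radius a = p_infty -> 0 <= g ->
  is_series (fun k => a k * (4 * g) ^ k * INR (fact (k + m))) v ->
  IntInf (fun y => y ^ m * exp (- y) * PSeries a (4 * g * y)) v.
Proof.
  intros Ha Hr Hg Hs.
  apply IntInf_ext with (fun y => y ^ m * exp (- y) * PSeries (fun k => a k * (4 * g) ^ k) y).
  intros t _. rewrite scaled_eq. reflexivity.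
  apply termwise; auto. apply coef_nonneg; auto. apply scaled_exs; auto. apply scaled_exd; auto.
Qed.

Lemma I_F0 g : 0 <= g -> IntInf (fun y => y ^ 0 * exp (- y) * J (4 * g * y)) (exp g).
Proof. intros Hg. apply termwise_J; auto. apply aJ_pos. apply CV_aJ. apply S_I1. Qed.
Lemma I_F0' g : 0 <= g -> IntInf (fun y => y ^ 1 * exp (- y) * J (4 * g * y)) ((g + 1) * exp g).
Proof. intros Hg. apply termwise_J; auto. apply aJ_pos. apply CV_aJ. apply S_I4. Qed.
Lemma I_F1 g : 0 <= g -> IntInf (fun y => y ^ 1 * exp (- y) * J1 (4 * g * y)) (exp g / 4).
Proof. intros Hg. apply termwise_J; auto. apply a1_pos. apply CV_a1. apply S_I2. Qed.
Lemma I_F1b g : 0 <= g -> IntInf (fun y => y ^ 2 * exp (- y) * J1 (4 * g * y)) ((g + 2) * exp g / 4).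
Proof. intros Hg. apply termwise_J; auto. apply a1_pos. apply CV_a1. apply S_I5. Qed.
Lemma I_F2 g : 0 <= g -> IntInf (fun y => y ^ 2 * exp (- y) * J2 (4 * g * y)) (exp g / 16).
Proof. intros Hg. apply termwise_J; auto. apply a2_pos. apply CV_a2. apply S_I3. Qed.

Lemma I_F3 g : 0 <= g -> exists M, IntInf (fun y => y ^ 2 * exp (- y) * (J1 (4 * g * y) ^ 2 / J (4 * g * y))) M.
Proof.
  intros Hg. apply IntInf_cmp with (fun y => / 4 * (y ^ 2 * exp (- y) * J1 (4 * g * y))) (/ 4 * ((g + 2) * exp g / 4)).
  - intros t Ht. assert (0 <= 4 * g * t) by (apply Rmult_le_pos; lra).
    assert (HJ := J_ge1 _ H). assert (H1 := J1_nonneg _ H). assert (H2 := J1_le _ H).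
    assert (0 <= t ^ 2 * exp (- t)) by (apply Rmult_le_pos; [apply pow_le; auto| apply Rlt_le, exp_pos]).
    split.
    + apply Rmult_le_pos; auto. apply Rdiv_le_0_compat. apply pow_le; auto. lra.
    + assert (K : J1 (4 * g * t) ^ 2 / J (4 * g * t) <= / 4 * J1 (4 * g * t)).
      { apply Rmult_le_reg_r with (J (4 * g * t)). lra.
        unfold Rdiv. rewrite Rmult_assoc, Rinv_l by lra. simpl pow. nra. }
      replace (/ 4 * (t ^ 2 * exp (- t) * J1 (4 * g * t))) with (t ^ 2 * exp (- t) * (/ 4 * J1 (4 * g * t))) by ring.
      apply Rmult_le_compat_l; auto.
  - intros b Hb. apply (ex_RInt_continuous (V := R_CompleteNormedModule)). intros z Hz.
    rewrite Rmin_left in Hz by lra. rewrite Rmax_right in Hz by lra.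
    apply (@ex_derive_continuous R_AbsRing R_NormedModule).
    assert (0 <= 4 * g * z) by (apply Rmult_le_pos; lra).
    auto_derive. repeat split.
    exists (J2 (4 * g * z)); apply J1_der. exists (J1 (4 * g * z)); apply J_der.
    generalize (J_pos _ H); lra.
  - apply IntInf_scal. apply I_F1b; auto.
Qed.

Lemma int0inf_ext f g : (forall t, 0 < t -> f t = g t) -> int0inf f = int0inf g.
Proof.
  intros H. unfold int0inf, RInt_gen. f_equal.
  apply functional_extensionality. intros l. apply propositional_extensionality.
  assert (Hf : filter_prod (at_point 0) (Rbar_locally p_infty)
     (fun ab : R * R => forall x : R, Rmin (fst ab) (snd ab) < x < Rmax (fst ab) (snd ab) -> f x = g x)).
  { exists (fun a => a = 0) (fun b => 0 < b). reflexivity. exists 0; auto.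
    intros a b -> Hb x Hx. simpl in Hx. rewrite Rmin_left in Hx by lra. apply H. lra. }
  assert (Hg : filter_prod (at_point 0) (Rbar_locally p_infty)
     (fun ab : R * R => forall x : R, Rmin (fst ab) (snd ab) < x < Rmax (fst ab) (snd ab) -> g x = f x)).
  { exists (fun a => a = 0) (fun b => 0 < b). reflexivity. exists 0; auto.
    intros a b -> Hb x Hx. simpl in Hx. rewrite Rmin_left in Hx by lra. symmetry. apply H. lra. }
  split; intros HI.
  - exact (is_RInt_gen_ext f g l Hf HI).
  - exact (is_RInt_gen_ext g f l Hg HI).
Qed.

Lemma upd_eq x n t : upd x n t n = t.
Proof. unfold upd. rewrite Nat.eqb_refl. reflexivity. Qed.
Lemma upd_neq x n t k : k <> n -> upd x n t k = x k.
Proof. intros H. unfold upd. apply Nat.eqb_neq in H. rewrite H. reflexivity. Qed.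

Lemma iter_int_S n F : iter_int (S n) F = int0inf (fun t => iter_int n (fun x => F (upd x n t))).
Proof. reflexivity. Qed.

Lemma iter_int_ext n F G : (forall x, (forall k, (k < n)%nat -> 0 < x k) -> F x = G x) ->
  iter_int n F = iter_int n G.
Proof.
  revert F G. induction n as [|n IH]; intros F G H.
  - simpl. apply H. intros; lia.
  - rewrite !iter_int_S. apply int0inf_ext. intros t Ht. apply IH.
    intros x Hx. apply H. intros k Hk. destruct (Nat.eq_dec k n) as [->|Hne].
    + rewrite upd_eq; auto.
    + rewrite upd_neq by auto. apply Hx. lia.
Qed.

Lemma prodR_ext n f g : (forall k, (k < n)%nat -> f k = g k) -> prodR n f = prodR n g.
Proof.
  induction n as [|n IH]; intros H; simpl. reflexivity.
  rewrite IH by (intros; apply H; lia). rewrite H by lia. reflexivity.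
Qed.

Lemma sumR_ext n f g : (forall k, (k < n)%nat -> f k = g k) -> sumR n f = sumR n g.
Proof.
  induction n as [|n IH]; intros H; simpl. reflexivity.
  rewrite IH by (intros; apply H; lia). rewrite H by lia. reflexivity.
Qed.

Lemma iter_sumprod n M (q : nat -> nat -> R -> R) (Qv : nat -> nat -> R) :
  (forall l k, IntInf (q l k) (Qv l k)) ->
  forall (c : nat -> R),
  iter_int n (fun x => sumR M (fun l => c l * prodR n (fun k => q l k (x k)))) =
  sumR M (fun l => c l * prodR n (fun k => Qv l k)).
Proof.
  intros HQ. induction n as [|n IH]; intros c.
  - reflexivity.
  - rewrite iter_int_S.
    transitivity (int0inf (fun t => sumR M (fun l => (c l * q l n t) * prodR n (fun k => Qv l k)))).
    + f_equal. apply functional_extensionality. intros t.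
      rewrite <- (IH (fun l => c l * q l n t)). f_equal.
      apply functional_extensionality. intros x. apply sumR_ext. intros l _.
      simpl prodR. rewrite upd_eq.
      rewrite (prodR_ext n (fun k => q l k (upd x n t k)) (fun k => q l k (x k))). ring.
      intros k Hk. rewrite upd_neq by lia. reflexivity.
    + apply IntInf_int0inf.
      replace (sumR M (fun l => c l * prodR (S n) (fun k => Qv l k)))
        with (sumR M (fun l => (c l * prodR n (fun k => Qv l k)) * Qv l n)).
      * apply IntInf_sumR. intros l.
        apply IntInf_ext with (fun t => (c l * prodR n (fun k => Qv l k)) * q l n t).
        intros; ring. apply IntInf_scal. apply HQ.
      * apply sumR_ext. intros l _. simpl prodR. ring.
Qed.

Lemma J_exd q : ex_derive J q.
Proof. exists (J1 q); apply J_der. Qed.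
Lemma J1_exd q : ex_derive J1 q.
Proof. exists (J2 q); apply J1_der. Qed.

Lemma der1 (u u1 : R -> R) s c t ph : 0 < s -> 0 <= c -> (forall p, 0 <= u p) ->
  is_derive u ph (u1 ph) ->
  is_derive (fun p => ln (1 / s) + (- (t + u p) / s) + ln (J (c * u p))) ph
    (- u1 ph / s + c * u1 ph * J1 (c * u ph) / J (c * u ph)).
Proof.
  intros Hs Hc Hu Hd.
  assert (Hq : 0 <= c * u ph) by (apply Rmult_le_pos; auto).
  assert (HJ := J_pos _ Hq).
  auto_derive.
  - repeat split; first [exists (u1 ph); exact Hd | apply J_exd | assumption | lra | exact I].
  -
    replace (Derive (fun x => J x) (c * u ph)) with (J1 (c * u ph)) by (symmetry; apply is_derive_unique; apply J_der).
    change (Derive (fun x => u x) ph) with (Derive u ph). rewrite (is_derive_unique _ _ _ Hd). field. lra.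
Qed.

Lemma der2 (u u1 u2 : R -> R) s c ph : 0 < s -> 0 <= c -> (forall p, 0 <= u p) ->
  (forall p, is_derive u p (u1 p)) -> is_derive u1 ph (u2 ph) ->
  is_derive (fun p => - u1 p / s + c * u1 p * J1 (c * u p) / J (c * u p)) ph
    (- u2 ph / s + c * u2 ph * J1 (c * u ph) / J (c * u ph)
     + (c * u1 ph) ^ 2 * (J2 (c * u ph) * J (c * u ph) - J1 (c * u ph) ^ 2) / J (c * u ph) ^ 2).
Proof.
  intros Hs Hc Hu Hd1 Hd2.
  assert (Hq : 0 <= c * u ph) by (apply Rmult_le_pos; auto).
  assert (HJ := J_pos _ Hq).
  auto_derive.
  - repeat split; first [exists (u2 ph); exact Hd2 | exists (u1 ph); apply Hd1 | apply J_exd | apply J1_exd | assumption | lra | exact I].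
  - change (Derive (fun x => u x) ph) with (Derive u ph). rewrite (is_derive_unique _ _ _ (Hd1 ph)).
    change (Derive (fun x => u1 x) ph) with (Derive u1 ph). rewrite (is_derive_unique _ _ _ Hd2).
    replace (Derive (fun x => J x) (c * u ph)) with (J1 (c * u ph)) by (symmetry; apply is_derive_unique; apply J_der).
    replace (Derive (fun x => J1 x) (c * u ph)) with (J2 (c * u ph)) by (symmetry; apply is_derive_unique; apply J1_der).
    field. lra.
Qed.

Definition uu L A al be l ph := A * (al ^ 2 + be ^ 2 + 2 * al * be * cos (psi L l + ph)).
Definition u1f L A al be l ph := - (2 * A * al * be * sin (psi L l + ph)).
Definition u2f L A al be l ph := - (2 * A * al * be * cos (psi L l + ph)).

Lemma uu_der L A al be l ph : is_derive (uu L A al be l) ph (u1f L A al be l ph).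
Proof. unfold uu, u1f. auto_derive. auto. ring. Qed.
Lemma u1_der L A al be l ph : is_derive (u1f L A al be l) ph (u2f L A al be l ph).
Proof. unfold u1f, u2f. auto_derive. auto. ring. Qed.

Lemma uu_nonneg L A al be l ph : 0 < A -> 0 < al -> 0 < be -> 0 <= uu L A al be l ph.
Proof.
  intros HA Ha Hb. unfold uu. apply Rmult_le_pos. lra.
  assert (Hc := COS_bound (psi L l + ph)).
  assert (0 <= al * be * (cos (psi L l + ph) + 1)) by (apply Rmult_le_pos; nra).
  assert (0 <= (al - be) ^ 2) by (apply pow2_ge_0). nra.
Qed.

Lemma dens_J L A al be s2 ph l t : 0 < A -> 0 < al -> 0 < be -> 0 < s2 -> 0 <= t ->
  dens L A al be s2 ph l t =
  1 / (A * s2) * exp (- (t + uu L A al be l ph) / (A * s2)) * J (4 * t / (A * s2) ^ 2 * uu L A al be l ph).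
Proof.
  intros HA Ha Hb Hs Ht. unfold dens. rewrite besselI0_J. fold (uu L A al be l ph).
  change (lam L A al be ph l) with (uu L A al be l ph).
  assert (Hu := uu_nonneg L A al be l ph HA Ha Hb).
  assert (0 < A * s2) by (apply Rmult_lt_0_compat; auto).
  f_equal. f_equal.
  replace ((sqrt (uu L A al be l ph * t) / (A * s2 / 2)) ^ 2)
    with (sqrt (uu L A al be l ph * t) * sqrt (uu L A al be l ph * t) / ((A * s2 / 2) * (A * s2 / 2)))
    by (simpl; field; lra).
  rewrite sqrt_sqrt by (apply Rmult_le_pos; auto). field. lra.
Qed.

Definition LLf L A al be s2 l t ph :=
  ln (1 / (A * s2)) + (- (t + uu L A al be l ph) / (A * s2)) + ln (J (4 * t / (A * s2) ^ 2 * uu L A al be l ph)).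

Lemma ln_dens L A al be s2 ph l t : 0 < A -> 0 < al -> 0 < be -> 0 < s2 -> 0 <= t ->
  ln (dens L A al be s2 ph l t) = LLf L A al be s2 l t ph.
Proof.
  intros HA Ha Hb Hs Ht. rewrite dens_J by auto. unfold LLf.
  assert (0 < A * s2) by (apply Rmult_lt_0_compat; auto).
  assert (Hq : 0 <= 4 * t / (A * s2) ^ 2 * uu L A al be l ph).
  { apply Rmult_le_pos. apply Rdiv_le_0_compat. lra. apply pow_lt; auto. apply uu_nonneg; auto. }
  rewrite ln_mult. rewrite ln_mult. rewrite ln_exp. reflexivity.
  apply Rdiv_lt_0_compat; lra. apply exp_pos.
  apply Rmult_lt_0_compat. apply Rdiv_lt_0_compat; lra. apply exp_pos.
  apply J_pos; auto.
Qed.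

Lemma dens_pos L A al be s2 ph l t : 0 < A -> 0 < al -> 0 < be -> 0 < s2 -> 0 <= t ->
  0 < dens L A al be s2 ph l t.
Proof.
  intros HA Ha Hb Hs Ht. rewrite dens_J by auto.
  assert (0 < A * s2) by (apply Rmult_lt_0_compat; auto).
  assert (Hq : 0 <= 4 * t / (A * s2) ^ 2 * uu L A al be l ph).
  { apply Rmult_le_pos. apply Rdiv_le_0_compat. lra. apply pow_lt; auto. apply uu_nonneg; auto. }
  apply Rmult_lt_0_compat. apply Rmult_lt_0_compat. apply Rdiv_lt_0_compat; lra. apply exp_pos.
  apply J_pos; auto.
Qed.

Definition ddf L A al be s2 l t ph :=
  - u1f L A al be l ph / (A * s2)
  + 4 * t / (A * s2) ^ 2 * u1f L A al be l ph * J1 (4 * t / (A * s2) ^ 2 * uu L A al be l ph)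
    / J (4 * t / (A * s2) ^ 2 * uu L A al be l ph).

Definition hhf L A al be s2 l t ph :=
  let c := 4 * t / (A * s2) ^ 2 in
  let q := c * uu L A al be l ph in
  - u2f L A al be l ph / (A * s2) + c * u2f L A al be l ph * J1 q / J q
  + (c * u1f L A al be l ph) ^ 2 * (J2 q * J q - J1 q ^ 2) / J q ^ 2.

Lemma LL_der L A al be s2 l t ph : 0 < A -> 0 < al -> 0 < be -> 0 < s2 -> 0 <= t ->
  is_derive (LLf L A al be s2 l t) ph (ddf L A al be s2 l t ph).
Proof.
  intros HA Ha Hb Hs Ht. unfold LLf, ddf.
  apply (der1 (uu L A al be l) (u1f L A al be l) (A * s2) (4 * t / (A * s2) ^ 2) t ph).
  apply Rmult_lt_0_compat; auto. apply Rdiv_le_0_compat. lra. apply pow_lt, Rmult_lt_0_compat; auto.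
  intros; apply uu_nonneg; auto. apply uu_der.
Qed.

Lemma dd_der L A al be s2 l t ph : 0 < A -> 0 < al -> 0 < be -> 0 < s2 -> 0 <= t ->
  is_derive (ddf L A al be s2 l t) ph (hhf L A al be s2 l t ph).
Proof.
  intros HA Ha Hb Hs Ht. unfold ddf, hhf.
  apply (der2 (uu L A al be l) (u1f L A al be l) (u2f L A al be l) (A * s2) (4 * t / (A * s2) ^ 2) ph).
  apply Rmult_lt_0_compat; auto. apply Rdiv_le_0_compat. lra. apply pow_lt, Rmult_lt_0_compat; auto.
  intros; apply uu_nonneg; auto. intros; apply uu_der. apply u1_der.
Qed.

Definition Phi s g a1 a2 y :=
  exp (- g) / s * ( - (a2 / s) * (y ^ 0 * exp (- y) * J (4 * g * y))
                    + (4 * a2 / s) * (y ^ 1 * exp (- y) * J1 (4 * g * y))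
                    + (16 * a1 ^ 2 / s ^ 2) * (y ^ 2 * exp (- y) * J2 (4 * g * y)
                                               - y ^ 2 * exp (- y) * (J1 (4 * g * y) ^ 2 / J (4 * g * y)))).

Lemma IntInf_val f v w : IntInf f v -> v = w -> IntInf f w.
Proof. intros H ->; exact H. Qed.

Lemma Phi_int s g a1 a2 M : 0 < s -> 0 <= g ->
  IntInf (fun y => y ^ 2 * exp (- y) * (J1 (4 * g * y) ^ 2 / J (4 * g * y))) M ->
  IntInf (Phi s g a1 a2) (a1 ^ 2 / s ^ 2 * (1 - 16 * exp (- g) * M) / s).
Proof.
  intros Hs Hg HM.
  apply IntInf_ext with (fun y => exp (- g) / s * (( - (a2 / s) * (y ^ 0 * exp (- y) * J (4 * g * y))
                    + (4 * a2 / s) * (y ^ 1 * exp (- y) * J1 (4 * g * y)))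
                    + (16 * a1 ^ 2 / s ^ 2) * (y ^ 2 * exp (- y) * J2 (4 * g * y)
                                               + (-1) * (y ^ 2 * exp (- y) * (J1 (4 * g * y) ^ 2 / J (4 * g * y)))))).
  { intros t _. unfold Phi. ring. }
  eapply IntInf_val.
  - apply IntInf_scal. apply IntInf_plus. apply IntInf_plus.
    apply IntInf_scal. apply I_F0; auto. apply IntInf_scal. apply I_F1; auto.
    apply IntInf_scal. apply IntInf_plus. apply I_F2; auto. apply IntInf_scal. exact HM.
  - rewrite exp_Ropp. assert (0 < exp g) by apply exp_pos. field. split; lra.
Qed.

Lemma integrand_eq s u a1 a2 t : 0 < s -> 0 <= u -> 0 <= t ->
  let c := 4 * t / s ^ 2 in let q := c * u in
  (- a2 / s + c * a2 * J1 q / J q + (c * a1) ^ 2 * (J2 q * J q - J1 q ^ 2) / J q ^ 2)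
  * (1 / s * exp (- (t + u) / s) * J q) = Phi s (u / s) a1 a2 (/ s * t).
Proof.
  intros Hs Hu Ht c q. unfold Phi.
  assert (Hq : 4 * (u / s) * (/ s * t) = q) by (unfold q, c; field; lra).
  rewrite Hq.
  assert (Hq0 : 0 <= q) by (unfold q, c; apply Rmult_le_pos; auto; apply Rdiv_le_0_compat; [lra|apply pow_lt; auto]).
  assert (HJ := J_pos q Hq0).
  replace (exp (- (t + u) / s)) with (exp (- (u / s)) * exp (- (/ s * t))).
  2: { rewrite <- exp_plus. f_equal. field. lra. }
  unfold c. simpl pow. field. split; lra.
Qed.

Definition F3 g := fun y => y ^ 2 * exp (- y) * (J1 (4 * g * y) ^ 2 / J (4 * g * y)).

Lemma q_int L A al be s2 phi l M : 0 < A -> 0 < al -> 0 < be -> 0 < s2 ->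
  IntInf (F3 (uu L A al be l phi / (A * s2))) M ->
  IntInf (fun t => hhf L A al be s2 l t phi * dens L A al be s2 phi l t)
    (u1f L A al be l phi ^ 2 / (A * s2) ^ 2 * (1 - 16 * exp (- (uu L A al be l phi / (A * s2))) * M)).
Proof.
  intros HA Ha Hb Hs HM.
  assert (Hs' : 0 < A * s2) by (apply Rmult_lt_0_compat; auto).
  assert (Hu := uu_nonneg L A al be l phi HA Ha Hb).
  assert (Hg : 0 <= uu L A al be l phi / (A * s2)) by (apply Rdiv_le_0_compat; auto).
  assert (H1 := Phi_int (A * s2) _ (u1f L A al be l phi) (u2f L A al be l phi) M Hs' Hg HM).
  assert (H2 := IntInf_scale _ _ (/ (A * s2)) ltac:(apply Rinv_0_lt_compat; auto) H1).
  eapply IntInf_val.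
  - apply IntInf_ext with (2 := H2). intros t Ht.
    rewrite dens_J by (auto; lra). unfold hhf; cbv zeta.
    symmetry. apply integrand_eq; auto; lra.
  - field. lra.
Qed.

Lemma dens_int L A al be s2 phi k : 0 < A -> 0 < al -> 0 < be -> 0 < s2 ->
  IntInf (dens L A al be s2 phi k) 1.
Proof.
  intros HA Ha Hb Hs.
  assert (Hs' : 0 < A * s2) by (apply Rmult_lt_0_compat; auto).
  set (u := uu L A al be k phi).
  assert (Hu : 0 <= u) by (apply uu_nonneg; auto).
  assert (Hg : 0 <= u / (A * s2)) by (apply Rdiv_le_0_compat; auto).
  assert (H1 := IntInf_scal (exp (- (u / (A * s2))) / (A * s2)) _ _ (I_F0 _ Hg)).
  assert (H2 := IntInf_scale _ _ (/ (A * s2)) ltac:(apply Rinv_0_lt_compat; auto) H1).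
  eapply IntInf_val.
  - apply IntInf_ext with (2 := H2). intros t Ht.
    rewrite dens_J by (auto; lra). fold u.
    replace (4 * t / (A * s2) ^ 2 * u) with (4 * (u / (A * s2)) * (/ (A * s2) * t)) by (field; lra).
    replace (exp (- (t + u) / (A * s2))) with (exp (- (u / (A * s2))) * exp (- (/ (A * s2) * t))).
    2: { rewrite <- exp_plus. f_equal. field. lra. }
    simpl pow. field. lra.
  - rewrite exp_Ropp. assert (0 < exp (u / (A * s2))) by apply exp_pos. field. split; lra.
Qed.

Lemma gfun_val g M : 0 < g -> IntInf (F3 g) M ->
  gfun g = exp (- g) * ((g + 1) * exp g - 16 * g * M) / g.
Proof.
  intros Hg HM. unfold gfun. apply IntInf_int0inf.
  set (H := fun y => exp (- g) * (y ^ 1 * exp (- y) * J (4 * g * y) + (- 16 * g) * F3 g y)).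
  assert (HI : IntInf H (exp (- g) * ((g + 1) * exp g + (- 16 * g) * M))).
  { apply IntInf_scal. apply IntInf_plus. apply I_F0'; lra. apply IntInf_scal. exact HM. }
  assert (H2 := IntInf_scale _ _ g Hg HI).
  eapply IntInf_val.
  - apply IntInf_ext with (2 := H2). intros t Ht. unfold H, F3.
    unfold besselR. rewrite besselI0_J, besselI1_J.
    assert (E : (2 * g * sqrt t) ^ 2 = 4 * g * (g * t)).
    { simpl. rewrite Rmult_1_r. replace (2 * g * sqrt t * (2 * g * sqrt t)) with (4 * g * g * (sqrt t * sqrt t)) by ring.
      rewrite sqrt_sqrt by lra. ring. }
    rewrite E.
    assert (Hq : 0 <= 4 * g * (g * t)) by (apply Rmult_le_pos; nra).
    assert (HJ := J_pos _ Hq).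
    replace (exp (- g * (1 + t))) with (exp (- g) * exp (- (g * t))).
    2: { rewrite <- exp_plus. f_equal. ring. }
    replace ((2 * (2 * g * sqrt t) * J1 (4 * g * (g * t)) / J (4 * g * (g * t))) ^ 2)
      with (4 * (4 * g * (g * t)) * J1 (4 * g * (g * t)) ^ 2 / J (4 * g * (g * t)) ^ 2).
    2: { replace (4 * (4 * g * (g * t))) with (4 * (2 * g * sqrt t) ^ 2) by (rewrite E; ring). field. lra. }
    simpl pow. field. lra.
  - field. lra.
Qed.

Lemma sumR_scal n c f : sumR n (fun l => c * f l) = c * sumR n f.
Proof. induction n as [|n IH]; simpl. ring. rewrite IH. ring. Qed.

Lemma sumR_affine n a b f : sumR n (fun l => a + b * f l) = INR n * a + b * sumR n f.
Proof. induction n as [|n IH]; simpl sumR. simpl; ring. rewrite IH, S_INR. ring. Qed.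

Lemma sumR_telescope n (f : nat -> R) : sumR n (fun l => f (S l) - f l) = f n - f 0%nat.
Proof. induction n as [|n IH]; simpl sumR. ring. rewrite IH. ring. Qed.

Lemma sumR_opp n f : sumR n (fun l => - f l) = - sumR n f.
Proof. induction n as [|n IH]; simpl. ring. rewrite IH. ring. Qed.

Lemma sum_cos L phi : (2 <= L)%nat -> sumR L (fun l => cos (psi L l + phi)) = 0.
Proof.
  intros HL.
  assert (HL' : 2 <= INR L) by (replace 2 with (INR 2) by (simpl; ring); apply le_INR; auto).
  set (d := PI / INR L).
  assert (Hd : 0 < d < PI).
  { unfold d. split. apply Rdiv_lt_0_compat. apply PI_RGT_0. lra.
    apply Rmult_lt_reg_r with (INR L). lra. unfold Rdiv. rewrite Rmult_assoc, Rinv_l by lra.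
    generalize PI_RGT_0; nra. }
  assert (Hs := sin_gt_0 d (proj1 Hd) (proj2 Hd)).
  set (f := fun l => sin (psi L l + phi - d)).
  assert (E : forall l, 2 * sin d * cos (psi L l + phi) = f (S l) - f l).
  { intros l. unfold f.
    replace (psi L (S l) + phi - d) with ((psi L l + phi) + d).
    2: { unfold psi, d. rewrite S_INR. field. lra. }
    replace (psi L l + phi - d) with ((psi L l + phi) - d) by ring.
    rewrite sin_plus, sin_minus. ring. }
  assert (T : 2 * sin d * sumR L (fun l => cos (psi L l + phi)) = 0).
  { rewrite <- sumR_scal. rewrite (sumR_ext L _ (fun l => f (S l) - f l)) by (intros; apply E).
    rewrite sumR_telescope. unfold f.
    replace (psi L L + phi - d) with ((psi L 0 + phi - d) + 2 * PI).
    2: { unfold psi. simpl INR. field. lra. }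
    rewrite sin_plus, sin_2PI, cos_2PI. ring. }
  apply Rmult_integral in T. destruct T as [T|T]; auto. lra.
Qed.

Lemma gam_bar_val L al be s2 phi : (2 <= L)%nat -> 0 < s2 ->
  gam_bar L al be s2 phi = (al ^ 2 + be ^ 2) / s2.
Proof.
  intros HL Hs. unfold gam_bar.
  rewrite (sumR_ext L _ (fun l => (al ^ 2 + be ^ 2) / s2 + (2 * al * be / s2) * cos (psi L l + phi))).
  2: { intros; unfold gam; field; lra. }
  rewrite sumR_affine, sum_cos by auto.
  assert (HL' : 2 <= INR L) by (replace 2 with (INR 2) by (simpl; ring); apply le_INR; auto).
  field. lra.
Qed.

Definition gl L A al be s2 phi l := uu L A al be l phi / (A * s2).
Definition Vf L A al be s2 phi l :=
  u1f L A al be l phi ^ 2 / (A * s2) ^ 2 *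
  (1 - 16 * exp (- gl L A al be s2 phi l) * int0inf (F3 (gl L A al be s2 phi l))).

Lemma per_l L A al be s2 phi l : 0 < A -> 0 < al -> 0 < be -> 0 < s2 ->
  IntInf (fun t => hhf L A al be s2 l t phi * dens L A al be s2 phi l t) (Vf L A al be s2 phi l) /\
  - Vf L A al be s2 phi l =
  (2 * al * be / s2) ^ 2 * (sin (psi L l + phi) ^ 2 * (/ gam L al be s2 phi l - gfun (gam L al be s2 phi l))).
Proof.
  intros HA Ha Hb Hs.
  assert (Hs' : 0 < A * s2) by (apply Rmult_lt_0_compat; auto).
  assert (Hu := uu_nonneg L A al be l phi HA Ha Hb).
  assert (Hg : 0 <= gl L A al be s2 phi l) by (unfold gl; apply Rdiv_le_0_compat; auto).
  destruct (I_F3 _ Hg) as [M HM]. fold (F3 (gl L A al be s2 phi l)) in HM.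
  assert (EM : int0inf (F3 (gl L A al be s2 phi l)) = M) by (apply IntInf_int0inf; auto).
  unfold Vf. rewrite EM. split.
  - apply q_int; auto.
  - assert (Eg : gam L al be s2 phi l = gl L A al be s2 phi l).
    { unfold gam, gl, uu. field. lra. }
    rewrite Eg.
    destruct (Rle_lt_or_eq_dec 0 _ Hg) as [Hgp|Hg0].
    + rewrite (gfun_val _ M Hgp HM). unfold u1f.
      assert (Eg2 : gl L A al be s2 phi l <> 0) by lra.
      rewrite exp_Ropp. assert (0 < exp (gl L A al be s2 phi l)) by apply exp_pos.
      field. repeat split; lra.
    + assert (Hc : cos (psi L l + phi) = -1).
      { unfold gl, uu in Hg0.
        assert (Z : al ^ 2 + be ^ 2 + 2 * al * be * cos (psi L l + phi) = 0).
        { apply Rmult_eq_reg_l with (A / (A * s2)). rewrite Rmult_0_r.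
          rewrite Hg0. field. lra. apply Rgt_not_eq, Rdiv_lt_0_compat; lra. }
        assert (Hcb := COS_bound (psi L l + phi)).
        assert (0 <= al * be * (cos (psi L l + phi) + 1)) by (apply Rmult_le_pos; nra).
        assert (0 <= (al - be) ^ 2) by apply pow2_ge_0.
        assert (al * be * (cos (psi L l + phi) + 1) = 0) by nra.
        apply Rmult_integral in H1. destruct H1 as [H1|H1]. nra. lra. }
      assert (Hsn : sin (psi L l + phi) = 0).
      { assert (H2 := sin2_cos2 (psi L l + phi)). rewrite Hc in H2. unfold Rsqr in H2.
        apply Rsqr_0_uniq. unfold Rsqr. lra. }
      unfold u1f. rewrite Hsn. replace (2 * A * al * be * 0) with 0 by ring. simpl pow. unfold Rdiv. rewrite !Rmult_0_l, !Ropp_0, !Rmult_0_l, Rmult_0_r. ring.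
Qed.

Lemma prodR_pos n f : (forall k, (k < n)%nat -> 0 < f k) -> 0 < prodR n f.
Proof. induction n as [|n IH]; intros H; simpl. lra. apply Rmult_lt_0_compat. apply IH; intros; apply H; lia. apply H; lia. Qed.

Lemma ln_prodR n f : (forall k, (k < n)%nat -> 0 < f k) -> ln (prodR n f) = sumR n (fun k => ln (f k)).
Proof.
  induction n as [|n IH]; intros H; simpl. apply ln_1.
  rewrite ln_mult. rewrite IH. reflexivity. intros; apply H; lia.
  apply prodR_pos; intros; apply H; lia. apply H; lia.
Qed.

Lemma is_derive_sumR n (F : nat -> R -> R) (dF : nat -> R) x :
  (forall l, (l < n)%nat -> is_derive (F l) x (dF l)) ->
  is_derive (fun y => sumR n (fun l => F l y)) x (sumR n dF).
Proof.
  induction n as [|n IH]; intros H; simpl.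
  - apply (is_derive_const 0).
  - apply (is_derive_plus (fun y => sumR n (fun l => F l y)) (F n)).
    apply IH; intros; apply H; lia. apply H; lia.
Qed.

Lemma prodR_pick n l (g f : nat -> R) a : (l < n)%nat ->
  (forall k, (k < n)%nat -> k <> l -> g k = f k) -> g l = a * f l -> prodR n g = a * prodR n f.
Proof.
  induction n as [|n IH]; intros Hl Hk Hg. lia. simpl.
  destruct (Nat.eq_dec l n) as [->|Hne].
  - rewrite (prodR_ext n g f) by (intros; apply Hk; lia). rewrite Hg. ring.
  - rewrite IH by (auto; lia). rewrite Hk by lia. ring.
Qed.

Lemma prodR_one n : prodR n (fun _ => 1) = 1.
Proof. induction n as [|n IH]; simpl. reflexivity. rewrite IH; ring. Qed.

Lemma sumR_mult_r n f c : sumR n f * c = sumR n (fun l => f l * c).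
Proof. induction n as [|n IH]; simpl. ring. rewrite <- IH. ring. Qed.

Theorem theorem1 (L : nat) (A alpha beta s2 phi : R) :
  (2 <= L)%nat -> 0 < A -> 0 < alpha -> 0 < beta -> 0 < s2 ->
  0 <= phi < 2 * PI ->
  / CRLB L A alpha beta s2 phi =
    (Kc alpha beta) ^ 2 * (gam_bar L alpha beta s2 phi) ^ 2 *
    sumR L (fun l => (sin (psi L l + phi)) ^ 2 *
                     (/ gam L alpha beta s2 phi l - gfun (gam L alpha beta s2 phi l))).
Proof.
  intros HL HA Ha Hb Hs Hphi.
  unfold CRLB. rewrite Rinv_inv. unfold fisher_info.
  set (qq := fun l k t => if Nat.eqb k l then hhf L A alpha beta s2 l t phi * dens L A alpha beta s2 phi k t
                          else dens L A alpha beta s2 phi k t).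
  rewrite (iter_int_ext L _ (fun x => sumR L (fun l => 1 * prodR L (fun k => qq l k (x k))))).
  2: {
    intros x Hx.
    assert (E1 : forall ph', ln (joint_dens L A alpha beta s2 ph' x) =
                             sumR L (fun l => LLf L A alpha beta s2 l (x l) ph')).
    { intros ph'. unfold joint_dens. rewrite ln_prodR.
      apply sumR_ext. intros k Hk. apply ln_dens; auto. apply Rlt_le; auto.
      intros k Hk. apply dens_pos; auto. apply Rlt_le; auto. }
    assert (E2 : forall ph, Derive (fun ph' => ln (joint_dens L A alpha beta s2 ph' x)) ph =
                            sumR L (fun l => ddf L A alpha beta s2 l (x l) ph)).
    { intros ph. rewrite (Derive_ext _ _ ph E1). apply is_derive_unique.
      apply (is_derive_sumR L (fun l => LLf L A alpha beta s2 l (x l))).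
      intros l Hl. apply LL_der; auto. apply Rlt_le; auto. }
    change (Derive (fun ph => Derive (fun ph' => ln (joint_dens L A alpha beta s2 ph' x)) ph) phi) with (Derive (Derive (fun ph' => ln (joint_dens L A alpha beta s2 ph' x))) phi). rewrite (Derive_ext _ _ phi E2).
    assert (D2 : Derive (fun ph => sumR L (fun l => ddf L A alpha beta s2 l (x l) ph)) phi =
                 sumR L (fun l => hhf L A alpha beta s2 l (x l) phi)).
    { apply is_derive_unique. apply (is_derive_sumR L (fun l => ddf L A alpha beta s2 l (x l))).
      intros l Hl; apply dd_der; auto; apply Rlt_le; auto. }
    rewrite D2.
    unfold joint_dens. rewrite sumR_mult_r. apply sumR_ext. intros l Hl.
    rewrite (prodR_pick L l (fun k => qq l k (x k)) (fun k => dens L A alpha beta s2 phi k (x k))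
               (hhf L A alpha beta s2 l (x l) phi)); auto.
    - ring.
    - intros k Hk Hne. unfold qq. apply Nat.eqb_neq in Hne. rewrite Hne. reflexivity.
    - unfold qq. rewrite Nat.eqb_refl. reflexivity. }
  assert (HI := iter_sumprod L L qq (fun l k => if Nat.eqb k l then Vf L A alpha beta s2 phi l else 1)).
  cbv beta in HI. rewrite HI.
  2: { intros l k. unfold qq. destruct (Nat.eqb k l) eqn:E.
       - apply Nat.eqb_eq in E. subst k. apply per_l; auto.
       - apply dens_int; auto. }
  rewrite (sumR_ext L _ (fun l => Vf L A alpha beta s2 phi l)).
  2: { intros l Hl. rewrite (prodR_pick L l _ (fun _ => 1) (Vf L A alpha beta s2 phi l)); auto.
       - rewrite prodR_one. ring.
       - intros k Hk Hne. apply Nat.eqb_neq in Hne. rewrite Hne. reflexivity.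
       - rewrite Nat.eqb_refl. ring. }
  rewrite <- sumR_opp.
  rewrite (sumR_ext L _ (fun l => (2 * alpha * beta / s2) ^ 2 * (sin (psi L l + phi) ^ 2 *
                     (/ gam L alpha beta s2 phi l - gfun (gam L alpha beta s2 phi l))))).
  2: { intros l Hl. apply per_l; auto. }
  rewrite sumR_scal. rewrite gam_bar_val by auto. unfold Kc.
  assert (0 < alpha ^ 2 + beta ^ 2) by nra.
  field. split; lra.
Qed.
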